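(* Let $F$ be a field of characteristic $2$ and let $A$ be a quaternion algebra over $F$ with $A\cong[a,b)\cong[\alpha,\beta)$ for some $a,\alpha\in F$, $b,\beta\in F^\times$. Then there exists an element $y\in A$ with $y^2\in F^\times$ such that $A\cong[a,b)\cong[a,y^2)\cong[\alpha,y^2)\cong[\alpha,\beta)$.
   Context: For $\alpha\in F$, $\beta\in F^\times$, $[\alpha,\beta)$ denotes the quaternion algebra $F\langle i,j : i^2+i=\alpha,\ j^2=\beta,\ jij^{-1}=i+1\rangle$. *)

(* Defs.v *)
From mathcomp Require Import all_boot all_algebra.
Set Implicit Arguments. Unset Strict Implicit. Unset Printing Implicit Defensive.
Import GRing.Theory.
Local Open Scope ring_scope.

(* Concrete model of the quaternion algebra [al, be) over F:
   F-basis 1, i, j, k := i*j with i^2 + i = al, j^2 = be, j i j^-1 = i + 1.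
   Multiplication table (valid in characteristic 2, where the presentation
   defines a 4-dimensional algebra):
     i*i = al - i,  i*j = k,      i*k = al j - k,
     j*i = j + k,   j*j = be,     j*k = be + be i,
     k*i = al j,    k*j = be i,   k*k = al be.                           *)
Record quat (F : Type) := Quat { q0 : F; q1 : F; q2 : F; q3 : F }.

Section QuatOps.
Variable F : fieldType.

Definition qone : quat F := Quat 1 0 0 0.
Definition qadd (x y : quat F) : quat F :=
  Quat (q0 x + q0 y) (q1 x + q1 y) (q2 x + q2 y) (q3 x + q3 y).
Definition qscale (c : F) (x : quat F) : quat F :=
  Quat (c * q0 x) (c * q1 x) (c * q2 x) (c * q3 x).
Definition qmul (al be : F) (x y : quat F) : quat F :=
  let: Quat x0 x1 x2 x3 := x in let: Quat y0 y1 y2 y3 := y in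
  Quat (x0*y0 + al*x1*y1 + be*x2*y2 + be*x2*y3 + al*be*x3*y3)
       (x0*y1 + x1*y0 - x1*y1 + be*x2*y3 + be*x3*y2)
       (x0*y2 + x2*y0 + al*x1*y3 + x2*y1 + al*x3*y1)
       (x0*y3 + x3*y0 + x1*y2 - x1*y3 + x2*y1).
End QuatOps.

Definition quat_iso (F : fieldType) (A : algType F) (al be : F) : Prop :=
  exists f : quat F -> A,
    [/\ bijective f,
        forall x y, f (qadd x y) = f x + f y,
        forall (c : F) x, f (qscale c x) = c *: f x,
        forall x y, f (qmul al be x y) = f x * f y
      & f (qone F) = 1].

(* Main.v *)
Require Import Defs.
From mathcomp Require Import all_boot all_algebra.
From mathcomp Require Import ring.
Set Implicit Arguments. Unset Strict Implicit. Unset Printing Implicit Defensive.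
Import GRing.Theory.
Local Open Scope ring_scope.

Section Gen.
Variable F : fieldType.
Variable A : algType F.


Definition coord (x : quat F) (k : nat) : F :=
  match k with 0 => q0 x | 1 => q1 x | 2 => q2 x | _ => q3 x end.
Definition ebas (k : nat) : quat F :=
  match k with 0 => Quat 1 0 0 0 | 1 => Quat 0 1 0 0 | 2 => Quat 0 0 1 0 | _ => Quat 0 0 0 1 end.
Definition lin (E : nat -> A) (x : quat F) : A := \sum_(k < 4) coord x k *: E k.

Lemma lin4 E x : lin E x = q0 x *: E 0%N + q1 x *: E 1%N + q2 x *: E 2%N + q3 x *: E 3%N.
Proof. by rewrite /lin !big_ord_recr big_ord0 /= add0r. Qed.

Lemma lin_add E x y : lin E (qadd x y) = lin E x + lin E y.
Proof. rewrite /lin -big_split /=; apply: eq_bigr => -[[|[|[|k]]] Hk] _ /=; by rewrite scalerDl. Qed.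

Lemma lin_scale E c x : lin E (qscale c x) = c *: lin E x.
Proof. rewrite /lin scaler_sumr; apply: eq_bigr => -[[|[|[|k]]] Hk] _ /=; by rewrite scalerA. Qed.

Lemma lin_mul (al be : F) E :
  (forall k l, (k < 4)%N -> (l < 4)%N ->
     E k * E l = \sum_(m < 4) coord (qmul al be (ebas k) (ebas l)) m *: E m) ->
  forall x y, lin E (qmul al be x y) = lin E x * lin E y.
Proof.
move=> hE x y.
rewrite /lin.
transitivity (\sum_(k < 4) \sum_(l < 4) \sum_(m < 4) ((coord x k * coord y l * coord (qmul al be (ebas k) (ebas l)) m) *: E m)).
  symmetry.
  under eq_bigr => k _ do rewrite exchange_big /=.
  rewrite exchange_big /=; apply: eq_bigr => m _.
  under eq_bigr => k _ do rewrite -scaler_suml.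
  rewrite -scaler_suml; symmetry; congr (_ *: _).
  case: x => x0 x1 x2 x3; case: y => y0 y1 y2 y3.
  rewrite !big_ord_recr !big_ord0 /=.
  case: m => -[|[|[|[|m]]]] Hm //=; ring.
rewrite mulr_suml; apply: eq_bigr => k _.
rewrite mulr_sumr; apply: eq_bigr => l _.
rewrite -scalerAl -scalerAr scalerA hE // scaler_sumr.
by apply: eq_bigr => m _; rewrite scalerA.
Qed.


Definition Eb (u v : A) (k : nat) : A :=
  match k with 0 => 1 | 1 => u | 2 => v | _ => u * v end.

Lemma Eb_table (a c : F) (u v : A) :
  u * u = a%:A - u -> v * v = c%:A -> v * u = v + u * v ->
  forall k l, (k < 4)%N -> (l < 4)%N ->
     Eb u v k * Eb u v l = \sum_(m < 4) coord (qmul a c (ebas k) (ebas l)) m *: Eb u v m.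
Proof.
move=> huu hvv hvu k l hk hl.
rewrite !big_ord_recr big_ord0 /= add0r.
have uuv : u * (u * v) = a *: v - u * v by rewrite mulrA huu mulrBl -scalerAl mul1r.
have vuv : v * (u * v) = c%:A + c *: u by rewrite mulrA hvu mulrDl -mulrA hvv -scalerAr mulr1.
have uvu : u * v * u = a *: v by rewrite -mulrA hvu mulrDr uuv addrC subrK.
have uvv : u * v * v = c *: u by rewrite -mulrA hvv -scalerAr mulr1.
have uvuv : u * v * (u * v) = (a * c)%:A.
  by rewrite mulrA uvu -scalerAl hvv scalerA.
case: k hk => [|[|[|[|k]]]] // _; case: l hl => [|[|[|[|l]]]] // _ /=;
  rewrite ?(mul0r, mulr0, mul1r, mulr1, add0r, addr0, subr0, sub0r, scale0r, scale1r, addr0, add0r, mul1r, mulr1, oppr0, scaleN1r, mulr1) //.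
all: assumption.
Qed.


Lemma scalar0 (s : F) : s%:A = 0 :> A -> s = 0.
Proof. by move/eqP; rewrite scaler_eq0 oner_eq0 orbF => /eqP. Qed.

Lemma lin_inj (a c : F) (u v : A) : c != 0 ->
  u * u = a%:A - u -> v * v = c%:A -> v * u = v + u * v ->
  forall x, lin (Eb u v) x = 0 -> x = Quat 0 0 0 0.
Proof.
move=> c0 huu hvv hvu.
have fmul := lin_mul (Eb_table huu hvv hvu).
set f := lin (Eb u v) in fmul *.
have fadd : forall x y, f (qadd x y) = f x + f y by move=> x y; exact: lin_add.
have fsc : forall k x, f (qscale k x) = k *: f x by move=> k x; exact: lin_scale.
have fQ : forall s t, f (Quat s t 0 0) = s%:A + t *: u.
  by move=> s t; rewrite /f lin4 /= !scale0r !addr0.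
have stepA : forall s t, f (Quat s t 0 0) = 0 -> s = 0 /\ t = 0.
  move=> s t hw.
  have : f (qmul a c (qadd (qmul a c (ebas 2) (Quat s t 0 0)) (qscale (-1) (qmul a c (Quat s t 0 0) (ebas 2)))) (ebas 2)) = 0.
    by rewrite fmul fadd fsc !fmul hw !(mulr0,mul0r) scaler0 addr0 mul0r.
  have -> : qmul a c (qadd (qmul a c (ebas 2) (Quat s t 0 0)) (qscale (-1) (qmul a c (Quat s t 0 0) (ebas 2)))) (ebas 2) = Quat (t * c) 0 0 0.
    by rewrite /=; congr Quat; ring.
  rewrite fQ scale0r addr0 => /scalar0 /eqP; rewrite mulf_eq0 (negbTE c0) orbF => /eqP t0.
  by move: hw; rewrite fQ t0 scale0r addr0 => /scalar0.
move=> [x0 x1 x2 x3] hx.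
have : f (qmul a c (qadd (qmul a c (ebas 1) (Quat x0 x1 x2 x3)) (qscale (-1) (qmul a c (Quat x0 x1 x2 x3) (ebas 1)))) (ebas 2)) = 0.
  by rewrite fmul fadd fsc !fmul hx !(mulr0,mul0r) scaler0 addr0 mul0r.
have -> : qmul a c (qadd (qmul a c (ebas 1) (Quat x0 x1 x2 x3)) (qscale (-1) (qmul a c (Quat x0 x1 x2 x3) (ebas 1)))) (ebas 2) = Quat (- (c * x2)) (- (c * x3)) 0 0.
  by rewrite /=; congr Quat; ring.
move/stepA => [/eqP]; rewrite oppr_eq0 mulf_eq0 (negbTE c0) /= => /eqP e2.
move/eqP; rewrite oppr_eq0 mulf_eq0 (negbTE c0) /= => /eqP e3.
subst x2 x3.
by have [-> ->] := stepA _ _ hx.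
Qed.


Lemma qdecomp (x : quat F) : x =
  qadd (qadd (qadd (qscale (q0 x) (ebas 0)) (qscale (q1 x) (ebas 1))) (qscale (q2 x) (ebas 2))) (qscale (q3 x) (ebas 3)).
Proof. by case: x => x0 x1 x2 x3; rewrite /qadd /qscale /= ; congr Quat; ring. Qed.

Definition tv (x : quat F) : 'rV[F]_4 := \row_(l < 4) coord x l.
Definition ofv (r : 'rV[F]_4) : quat F :=
  Quat (r ord0 (inord 0)) (r ord0 (inord 1)) (r ord0 (inord 2)) (r ord0 (inord 3)).

Lemma tvK x : ofv (tv x) = x.
Proof. by case: x => x0 x1 x2 x3; rewrite /ofv /tv !mxE !inordK. Qed.

Lemma ofvK r : tv (ofv r) = r.
Proof.
apply/rowP => l; rewrite /ofv /tv mxE.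
have -> : ord0 = 0 :> 'I_1 by apply/val_inj.
case: l => -[|[|[|[|l]]]] Hl //=; congr (r _ _); apply/val_inj; by rewrite /= inordK.
Qed.

Lemma surj_dim (g f : quat F -> A) : bijective g ->
  (forall x y, g (qadd x y) = g x + g y) -> (forall k x, g (qscale k x) = k *: g x) ->
  (forall x y, f (qadd x y) = f x + f y) -> (forall k x, f (qscale k x) = k *: f x) ->
  (forall x, f x = 0 -> x = Quat 0 0 0 0) -> bijective f.
Proof.
move=> [ginv gK ginvK] gadd gsc fadd fsc fker.
have g0 : g (Quat 0 0 0 0) = 0.
  by have := gsc 0 (Quat 0 0 0 0); rewrite scale0r /qscale /= mul0r.
have ginj : injective g by exact: can_inj gK.
pose phi x := ginv (f x).
have phiadd : forall x y, phi (qadd x y) = qadd (phi x) (phi y).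
  by move=> x y; apply: ginj; rewrite gadd /phi !ginvK fadd.
have phisc : forall k x, phi (qscale k x) = qscale k (phi x).
  by move=> k x; apply: ginj; rewrite gsc /phi !ginvK fsc.
pose M : 'M[F]_4 := \matrix_(k < 4, l < 4) coord (phi (ebas k)) l.
have phiM : forall x, tv (phi x) = tv x *m M.
  move=> x; rewrite {1}(qdecomp x) !phiadd !phisc.
  apply/rowP => l; rewrite !mxE !big_ord_recr big_ord0 /= !mxE /= add0r.
  by case: l => -[|[|[|[|l]]]] Hl //=.
have finj : forall x, f x = 0 -> x = Quat 0 0 0 0 := fker.
have Mfree : row_free M.
  rewrite -kermx_eq0; apply/eqP/row_matrixP => i; rewrite row0.
  have hr : row i (kermx M) *m M = 0 by rewrite -row_mul mulmx_ker row0.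
  set r := row i (kermx M) in hr *.
  have : phi (ofv r) = Quat 0 0 0 0.
    by rewrite -[phi _]tvK phiM ofvK hr /ofv !mxE.
  move=> /(congr1 g); rewrite /phi ginvK g0 => /fker /(congr1 tv); rewrite ofvK => ->.
  by apply/rowP => l; rewrite !mxE; case: l => -[|[|[|[|l]]]] Hl.
have Munit : M \in unitmx by rewrite -row_free_unit.
pose finv a := ofv (tv (ginv a) *m invmx M).
have fK' : cancel finv f.
  move=> a; rewrite -[LHS]ginvK -[RHS]ginvK; congr g; rewrite -/(phi _) -[phi _]tvK phiM /finv ofvK.
  by rewrite mulmxKV // tvK.
exists finv => // x.
have e : f (qadd (finv (f x)) (qscale (-1) x)) = 0 by rewrite fadd fsc fK' scaleN1r subrr.
move/fker: e; case: x => x0 x1 x2 x3; case: (finv _) => y0 y1 y2 y3 /= [] h0 h1 h2 h3.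
by congr Quat; apply/eqP; rewrite -subr_eq0 -mulN1r ?(h0,h1,h2,h3) eqxx.
Qed.


Lemma mk_iso (a0 b0 a c : F) (u v : A) : quat_iso A a0 b0 -> c != 0 ->
  u * u = a%:A - u -> v * v = c%:A -> v * u = v + u * v -> quat_iso A a c.
Proof.
move=> [g [gbij gadd gsc _ _]] c0 huu hvv hvu.
exists (lin (Eb u v)); split.
- apply: (surj_dim gbij gadd gsc); first exact: lin_add.
    exact: lin_scale.
  exact: lin_inj c0 huu hvv hvu.
- exact: lin_add.
- exact: lin_scale.
- exact: lin_mul (Eb_table huu hvv hvu).
- by rewrite lin4 /= !scale0r !addr0 scale1r.
Qed.

Lemma iso_rel (al be : F) (g : quat F -> A) :
  (forall x y, g (qadd x y) = g x + g y) ->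
  (forall (c : F) x, g (qscale c x) = c *: g x) ->
  (forall x y, g (qmul al be x y) = g x * g y) ->
  g (qone F) = 1 ->
  [/\ g (ebas 1) * g (ebas 1) = al%:A - g (ebas 1),
      g (ebas 2) * g (ebas 2) = be%:A,
      g (ebas 2) * g (ebas 1) = g (ebas 2) + g (ebas 1) * g (ebas 2)
    & forall x, g x = lin (Eb (g (ebas 1)) (g (ebas 2))) x].
Proof.
move=> gadd gsc gmul g1.
have g3 : g (ebas 3) = g (ebas 1) * g (ebas 2).
  by rewrite -gmul; congr g; rewrite /=; congr Quat; ring.
have glin : forall x, g x = lin (Eb (g (ebas 1)) (g (ebas 2))) x.
  move=> x; rewrite {1}(qdecomp x) !gadd !gsc lin4 /= -g3; congr (_ + _ + _ + _).
  by rewrite -g1.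
split => //.
- rewrite -gmul glin lin4 /= -g3.
  rewrite ?(mul0r, mulr0, mul1r, mulr1, add0r, addr0, subr0, sub0r, scale0r, oppr0, scaleN1r).
  by [].
- rewrite -gmul glin lin4 /= -g3.
  by rewrite ?(mul0r, mulr0, mul1r, mulr1, add0r, addr0, subr0, sub0r, scale0r, oppr0, scaleN1r).
- rewrite -gmul glin lin4 /= -g3.
  by rewrite ?(mul0r, mulr0, mul1r, mulr1, add0r, addr0, subr0, sub0r, scale0r, oppr0, scaleN1r, scale1r).
Qed.


Lemma c2h (h2 : (2%:R : F) = 0) (x y e k : F) : e = 0 -> x - y = e + 2%:R * k -> x = y.
Proof. by move=> -> ; rewrite h2 mul0r addr0 => /eqP; rewrite subr_eq0 => /eqP. Qed.

Lemma ZZ (h2 : (2%:R : F) = 0) (a b s t : F) :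
  qmul a b (Quat 0 0 s t) (Quat 0 0 s t) = Quat (b * (s * s + s * t + a * t * t)) 0 0 0.
Proof.
rewrite /=; congr Quat; try ring.
by apply: (c2h h2 (erefl 0) (k := b * s * t)); ring.
Qed.

Lemma ZI (a b s t : F) :
  qmul a b (Quat 0 0 s t) (ebas 1) = qadd (Quat 0 0 s t) (qmul a b (ebas 1) (Quat 0 0 s t)).
Proof. by rewrite /= /qadd /=; congr Quat; ring. Qed.

Lemma ZP (a b p0 s t : F) :
  qmul a b (Quat 0 0 s t) (Quat p0 1 s t) = qadd (Quat 0 0 s t) (qmul a b (Quat p0 1 s t) (Quat 0 0 s t)).
Proof. by rewrite /= /qadd /=; congr Quat; ring. Qed.

Lemma JP (a b p0 : F) :
  qmul a b (ebas 2) (Quat p0 1 0 0) = qadd (ebas 2) (qmul a b (Quat p0 1 0 0) (ebas 2)).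
Proof. by rewrite /= /qadd /=; congr Quat; ring. Qed.


Lemma split_iso (h2 : (2%:R : F) = 0) (a b : F) (w : A) :
  quat_iso A a b -> b != 0 -> w != 0 -> w * w = 0 -> quat_iso A a 1.
Proof.
move=> iso b0 w0 ww; have iso' := iso.
case: iso => k [[kinv kK kinvK] kadd ksc kmul k1].
have [kuu kvv kvu klin] := iso_rel kadd ksc kmul k1.
have k0 : k (Quat 0 0 0 0) = 0.
  by have := ksc 0 (Quat 0 0 0 0); rewrite scale0r /qscale /= mul0r.
have kY : k (kinv w) = w by [].
have YY : qmul a b (kinv w) (kinv w) = Quat 0 0 0 0.
  by apply: (can_inj kK); rewrite kmul kY ww k0.
have Ynz : kinv w <> Quat 0 0 0 0 by move=> e; move: w0; rewrite -kY e k0 eqxx.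
move: YY Ynz; case: (kinv w) => y0 y1 y2 y3 /= [e0 e1 _ _] Ynz.
have y10 : y1 = 0.
  have : y1 * y1 = 0 by apply: (c2h h2 e1 (k := y1 * y1 - y0 * y1 - b * y2 * y3)); ring.
  by move/eqP; rewrite mulf_eq0 orbb => /eqP.
subst y1.
pose N s t := s * s + s * t + a * t * t.
have hbN : b * N y2 y3 = y0 * y0.
  by apply: (c2h h2 e0 (k := - (y0 * y0))); rewrite /N; ring.
have [s [t hst]] : exists s t, b * N s t = 1.
  have [y00|y0n] := eqVneq y0 0.
    subst y0; rewrite mul0r in hbN.
    have N0 : N y2 y3 = 0 by move/eqP: hbN; rewrite mulf_eq0 (negbTE b0) => /eqP.
    have y3n : y3 != 0.
      apply/eqP => y30; subst y3; apply: Ynz; move: N0; rewrite /N !(mulr0, addr0).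
      by move/eqP; rewrite mulf_eq0 orbb => /eqP ->.
    pose l := (b^-1 - 1) / y3.
    exists (l * y2 + 1), (l * y3).
    have -> : N (l * y2 + 1) (l * y3) = l * l * N y2 y3 + l * y3 + 1.
      by apply: (c2h h2 (erefl 0) (k := l * y2)); rewrite /N; ring.
    rewrite N0 mulr0 add0r /l divfK // subrK divff //.
  exists (y2 / y0), (y3 / y0).
  have -> : b * N (y2 / y0) (y3 / y0) = b * N y2 y3 / (y0 * y0).
    by rewrite /N; field.
  by rewrite hbN divff // mulf_neq0.
apply: (mk_iso iso' (oner_neq0 F) kuu (v := k (Quat 0 0 s t))).
- rewrite -kmul ZZ // -/(N s t) hst klin lin4 /=.
  by rewrite !scale0r !addr0 scale1r.
- by rewrite -kmul ZI kadd kmul.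
Qed.


Lemma c2e (h2 : (2%:R : F) = 0) (x y L R k : F) : L = R -> x - y = L - R + 2%:R * k -> x = y.
Proof. by move=> e hk; apply: (c2h h2 (e := L - R) _ hk); rewrite e subrr. Qed.

End Gen.
Arguments ebas {F} k.

Theorem lemma4 (F : fieldType) (A : algType F) (a b al be : F) :
  2%N \in [pchar F] -> b != 0 -> be != 0 ->
  quat_iso A a b -> quat_iso A al be ->
  exists (y : A) (c : F),
    [/\ c != 0, y ^+ 2 = c%:A, quat_iso A a c & quat_iso A al c].
Proof.
move=> ch b0 be0 isoA isoB.
have h2 : (2%:R : F) = 0 := pcharf0 ch.
have isoA' := isoA; have isoB' := isoB.
case: isoA => g [[ginv gK ginvK] gadd gsc gmul g1].
case: isoB => h [hbij hadd hsc hmul h1].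
have [guu gvv gvu glin] := iso_rel gadd gsc gmul g1.
have [huu hvv hvu hlin] := iso_rel hadd hsc hmul h1.
have g0 : g (Quat 0 0 0 0) = 0.
  by have := gsc 0 (Quat 0 0 0 0); rewrite scale0r /qscale /= mul0r.
have gsca : forall s, g (Quat s 0 0 0) = s%:A.
  by move=> s; rewrite glin lin4 /= !scale0r !addr0.
have gP : g (ginv (h (ebas 1))) = h (ebas 1) by rewrite ginvK.
have PP : qmul a b (ginv (h (ebas 1))) (ginv (h (ebas 1))) =
          qadd (Quat al 0 0 0) (qscale (-1) (ginv (h (ebas 1)))).
  by apply: (can_inj gK); rewrite gmul gP huu gadd gsc gP gsca scaleN1r.
move: PP gP; case: (ginv (h (ebas 1))) => p0 p1 p2 p3; rewrite /qadd /qscale /= => -[e0 e1 e2 e3] gP.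
have p11 : p1 * p1 = p1.
  by apply: (c2e h2 e1 (k := p1 * p1 - p1 - p0 * p1 - b * p2 * p3)); ring.
have {p11} p1v : p1 = 1.
  have [p10|p1n] := eqVneq p1 0; last first.
    by apply: (mulIf p1n); rewrite mul1r.
  exfalso; subst p1.
  have p20 : p2 = 0 by apply: (c2e h2 e2 (k := - (p0 * p2))); ring.
  have p30 : p3 = 0 by apply: (c2e h2 e3 (k := - (p0 * p3))); ring.
  subst p2 p3; rewrite gsca in gP.
  move: hvu; rewrite -gP mulr_algr mulr_algl => e.
  have := congr1 (fun z => z - p0 *: h (ebas 2)) e; rewrite /= subrr addrK => /esym v0.
  by move: hvv; rewrite v0 mul0r => /esym /scalar0 /eqP; rewrite (negbTE be0).
subst p1.
have [/andP [/eqP p20 /eqP p30] | pn] := boolP ((p2 == 0) && (p3 == 0)).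
  subst p2 p3.
  exists (g (ebas 2)), b; split => //; idtac.
  apply: (mk_iso isoA' b0 huu gvv).
  by rewrite -gP -gmul JP gadd gmul.
pose N := p2 * p2 + p2 * p3 + a * p3 * p3.
have gZZ : g (Quat 0 0 p2 p3) * g (Quat 0 0 p2 p3) = (b * N)%:A by rewrite -gmul ZZ // gsca.
have [bN0|bNn] := eqVneq (b * N) 0; last first.
  exists (g (Quat 0 0 p2 p3)), (b * N); split => //; try by rewrite expr2.
    apply: (mk_iso isoA' bNn guu gZZ).
    by rewrite -gmul ZI gadd gmul.
  apply: (mk_iso isoA' bNn huu gZZ).
  by rewrite -gP -gmul ZP gadd gmul.
have w0 : g (Quat 0 0 p2 p3) != 0.
  apply/eqP; rewrite -g0 => /(can_inj gK) [e2' e3'].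
  by move: pn; rewrite e2' e3' eqxx.
rewrite bN0 scale0r in gZZ.
exists 1, 1; split.
- exact: oner_neq0.
- by rewrite expr1n scale1r.
- exact: (split_iso (w := g (Quat 0 0 p2 p3)) h2 isoA' b0 w0 gZZ).
- exact: (split_iso (w := g (Quat 0 0 p2 p3)) h2 isoB' be0 w0 gZZ).
Qed.
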